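(* Let $k\ge 2$ be an integer and $n=2k$. For every positive integer $s$, $$\alpha\big(I_{B_{2k}}^{(s(k-1))}\big)=sk.$$
   Context: Let $\mathbb{K}$ be a field. $Q_n$ is the cycle graph on vertices $1,\dots,n$ (edges $\{i,i+1\}$ for $1\le i\le n-1$ and $\{n,1\}$). $B_n$ is the simplicial complex on $\{0,\dots,n+1\}$ whose facets are $\{0,i,j\}$ and $\{n+1,i,j\}$ for each edge $\{i,j\}$ of $Q_n$ (boundary of the bipyramid over the $n$-gon), and $I_{B_n}\subset R=\mathbb{K}[x_0,\dots,x_{n+1}]$ is its Stanley-Reisner ideal, generated by $\prod_{i\in\tau}x_i$ over non-faces $\tau$. For a homogeneous ideal $I$, $I^{(m)}=R\cap\bigcap_{P\in\mathrm{Ass}(I)}I^mR_P$ and $\alpha(I)=\min\{t: I_t\ne 0\}$. *)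

(* Defs.v *)
From HB Require Import structures.
From mathcomp Require Import all_boot all_order all_algebra.
From mathcomp Require Import mpoly.
Set Implicit Arguments. Unset Strict Implicit. Unset Printing Implicit Defensive.
Import GRing.Theory.
Local Open Scope ring_scope.

Section Ideals.
Variable R : comNzRingType.

Definition gen_ideal (S : R -> Prop) (f : R) : Prop :=
  exists l : seq (R * R), (forall p, p \in l -> S p.2) /\
    f = \sum_(p <- l) p.1 * p.2.

Definition pow_ideal (I : R -> Prop) (m : nat) : R -> Prop :=
  gen_ideal (fun f => exists l : seq R,
     size l = m /\ (forall g, g \in l -> I g) /\ f = \prod_(g <- l) g).

Definition is_ideal (P : R -> Prop) : Prop :=
  [/\ P 0, (forall a b, P a -> P b -> P (a + b)) &
      (forall a b, P b -> P (a * b))].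

Definition is_prime_ideal (P : R -> Prop) : Prop :=
  is_ideal P /\ ~ P 1 /\ (forall a b, P (a * b) -> P a \/ P b).

Definition Ass (I : R -> Prop) (P : R -> Prop) : Prop :=
  is_prime_ideal P /\ exists h : R, forall f, P f <-> I (f * h).

(* symbolic power I^(m) = R ∩ ⋂_{P ∈ Ass I} I^m R_P ;
   f/1 ∈ I^m R_P  iff  u f ∈ I^m for some u ∉ P *)
Definition symb_pow (I : R -> Prop) (m : nat) (f : R) : Prop :=
  forall P, Ass I P -> exists u, ~ P u /\ pow_ideal I m (u * f).
End Ideals.

Definition is_alpha (N : nat) (K : fieldType) (I : {mpoly K[N]} -> Prop)
    (al : nat) : Prop :=
  (exists f : {mpoly K[N]}, f != 0 /\ f \is al.-homog /\ I f) /\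
  (forall (t : nat) (f : {mpoly K[N]}), f != 0 -> f \is t.-homog -> I f ->
      (al <= t)%N).

Definition SR_ideal (N : nat) (K : fieldType) (face : {set 'I_N} -> bool)
  : {mpoly K[N]} -> Prop :=
  gen_ideal (fun f => exists tau : {set 'I_N},
     ~~ face tau /\ f = \prod_(i in tau) 'X_i).

Definition Qedge (n i j : nat) : bool :=
  ((1 <= i) && (i < n) && (j == i.+1))%N || ((i == n) && (j == 1%N)).
Definition Qadj (n i j : nat) : bool := Qedge n i j || Qedge n j i.

(* B_n on vertices {0,...,n+1} = 'I_(n.+2); a set is a face iff it is
   contained in some facet {0,i,j} or {n+1,i,j} with {i,j} an edge of Q_n *)
Definition B_face (n : nat) (tau : {set 'I_n.+2}) : bool :=
  [exists i : 'I_n.+2, exists j : 'I_n.+2,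
     Qadj n i j &&
     ((tau \subset [set (inord 0 : 'I_n.+2); i; j]) ||
      (tau \subset [set (inord n.+1 : 'I_n.+2); i; j]))].

Definition I_B (K : fieldType) (n : nat) : {mpoly K[n.+2]} -> Prop :=
  @SR_ideal n.+2 K (@B_face n).

(* Main.v *)
Require Import Defs.
From HB Require Import structures.
From mathcomp Require Import all_boot all_order all_algebra.
From mathcomp Require Import mpoly.
From mathcomp Require Import zify.
From Stdlib Require Classical_Prop.
Set Implicit Arguments. Unset Strict Implicit. Unset Printing Implicit Defensive.
Import GRing.Theory.
Local Open Scope ring_scope.

Definition hF (N : nat) (K : fieldType) (F : {set 'I_N}) (i : 'I_N) : {poly {mpoly K[N]}} :=
  if i \in F then ('X_i)%:P else 'X * ('X_i)%:P.
Definition phi (N : nat) (K : fieldType) (F : {set 'I_N}) (g : {mpoly K[N]}) : {poly {mpoly K[N]}} :=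
  mmap (polyC \o @mpolyC N K) (@hF N K F) g.
Definition dF (N : nat) (F : {set 'I_N}) (m : 'X_{1..N}) : nat := (\sum_(i | i \notin F) m i)%N.

Lemma mmap1_phi (N : nat) (K : fieldType) (F : {set 'I_N}) (m : 'X_{1..N}) :
  mmap1 (@hF N K F) m = ('X_[m] : {mpoly K[N]}) *: 'X^(dF F m).
Proof.
rewrite /mmap1.
rewrite (eq_bigr (fun i => ('X_i ^+ m i)%:P * 'X^(if i \in F then 0 else m i)%N)); last first.
  move=> i _; rewrite /hF; case: (i \in F).
    by rewrite expr0 mulr1 rmorphXn.
  by rewrite exprMn rmorphXn mulrC.
rewrite big_split /= -rmorph_prod -mpolyXE_id.
rewrite (eq_bigr (fun i => 'X ^+ (if i \in F then 0 else m i)%N)) //.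
rewrite mul_polyC /dF -prodrXr; congr (_ *: _).
rewrite [RHS]big_mkcond /=; apply: eq_bigr => i _; by case: (i \in F) => /=; rewrite ?expr0.
Qed.

Lemma phiE (N : nat) (K : fieldType) (F : {set 'I_N}) (g : {mpoly K[N]}) :
  phi F g = \sum_(m <- msupp g) (g@_m *: 'X_[m]) *: 'X^(dF F m).
Proof.
rewrite /phi /mmap; apply: eq_bigr => m _.
by rewrite mmap1_phi /= mul_polyC scalerA mul_mpolyC.
Qed.

Lemma coef_phi (N : nat) (K : fieldType) (F : {set 'I_N}) (g : {mpoly K[N]}) k :
  (phi F g)`_k = \sum_(m <- msupp g | dF F m == k) g@_m *: 'X_[m].
Proof. by rewrite phiE coef_sumMXn. Qed.

Lemma mcoeff_phi (N : nat) (K : fieldType) (F : {set 'I_N}) (g : {mpoly K[N]}) k b :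
  ((phi F g)`_k)@_b = if dF F b == k then g@_b else 0.
Proof.
rewrite coef_phi raddf_sum /=.
under eq_bigr => m _ do rewrite mcoeffZ mcoeffX.
have [bin|bnin] := boolP (b \in msupp g).
  rewrite big_mkcond (bigD1_seq b) ?msupp_uniq //= big1 ?addr0.
    by case: (dF F b == k); rewrite ?eqxx ?mulr1 //.
  move=> m nmb; rewrite eq_sym (negbTE nmb) mulr0; by case: ifP.
rewrite big_seq_cond big1 ?(memN_msupp_eq0 bnin) ?if_same //.
move=> m /andP[min _]; case: eqP => [emb|]; last by rewrite mulr0.
by rewrite -emb min in bnin.
Qed.

Definition Zm (R : comNzRingType) (m : nat) (p : {poly R}) : Prop :=
  forall i, (i < m)%N -> p`_i = 0.

Lemma Zm0 (R : comNzRingType) (p : {poly R}) : Zm 0 p.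
Proof. by []. Qed.

Lemma Zm_add (R : comNzRingType) m (p q : {poly R}) : Zm m p -> Zm m q -> Zm m (p + q).
Proof. by move=> hp hq i lt; rewrite coefD hp ?hq ?addr0. Qed.

Lemma Zm_zero (R : comNzRingType) m : Zm m (0 : {poly R}).
Proof. by move=> i _; rewrite coef0. Qed.

Lemma Zm_mul (R : comNzRingType) a b (p q : {poly R}) :
  Zm a p -> Zm b q -> Zm (a + b) (p * q).
Proof.
move=> hp hq i lt; rewrite coefM big1 // => j _.
case: (ltnP j a) => ja; first by rewrite hp ?mul0r.
rewrite hq ?mulr0 //.
have := ltn_ord j; lia.
Qed.

Lemma Zm_mull (R : comNzRingType) a (p q : {poly R}) : Zm a q -> Zm a (p * q).
Proof. by move=> hq; apply: (@Zm_mul R 0 a). Qed.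

Lemma Zm_le (R : comNzRingType) a b (p : {poly R}) : (a <= b)%N -> Zm b p -> Zm a p.
Proof. by move=> ab hp i lt; apply: hp; apply: leq_trans ab. Qed.

Lemma Zm_primary (K : idomainType) m (p q : {poly K}) :
  p`_0 != 0 -> Zm m (p * q) -> Zm m q.
Proof.
move=> p0; elim: m => [|m IH] h; first by [].
have hm : Zm m q by apply: IH; apply: Zm_le h.
move=> i; rewrite ltnS leq_eqVlt => /orP[/eqP ->|lt]; last by apply: hm.
have := h m (ltnSn m); rewrite coefM big_ord_recl /= subn0 big1 ?addr0.
  by move/eqP; rewrite mulf_eq0 (negbTE p0) /= => /eqP.
move=> j _; rewrite hm ?mulr0 //=.
have := ltn_ord j; rewrite /bump /=; lia.
Qed.

Lemma gen_ind (R : comNzRingType) (S Q : R -> Prop) :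
  Q 0 -> (forall a b, Q a -> Q b -> Q (a + b)) -> (forall a b, Q b -> Q (a * b)) ->
  (forall x, S x -> Q x) -> forall f, gen_ideal S f -> Q f.
Proof.
move=> Q0 QD QM QS f [l [hl ->]]; elim: l hl => [|p l IH] hl.
  by rewrite big_nil.
rewrite big_cons; apply: QD; first by apply/QM/QS/hl; rewrite inE eqxx.
by apply: IH => q ql; apply: hl; rewrite inE ql orbT.
Qed.

Lemma gen_in (R : comNzRingType) (S : R -> Prop) x : S x -> gen_ideal S x.
Proof.
move=> Sx; exists [:: (1, x)]; split; last by rewrite big_seq1 mul1r.
by move=> p; rewrite inE => /eqP ->.
Qed.

Lemma gen_0 (R : comNzRingType) (S : R -> Prop) : gen_ideal S 0.
Proof. by exists [::]; split => //; rewrite big_nil. Qed.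

Lemma gen_add (R : comNzRingType) (S : R -> Prop) a b :
  gen_ideal S a -> gen_ideal S b -> gen_ideal S (a + b).
Proof.
move=> [l1 [h1 ->]] [l2 [h2 ->]]; exists (l1 ++ l2); split; last by rewrite big_cat.
by move=> p; rewrite mem_cat => /orP[/h1|/h2].
Qed.

Lemma gen_mull (R : comNzRingType) (S : R -> Prop) a b :
  gen_ideal S b -> gen_ideal S (a * b).
Proof.
move=> [l [hl ->]]; exists [seq (a * p.1, p.2) | p <- l]; split.
  by move=> p /mapP[q ql ->] /=; apply: hl.
by rewrite big_map mulr_sumr; apply: eq_bigr => p _; rewrite mulrA.
Qed.

Lemma gen_sum (R : comNzRingType) (S : R -> Prop) (I : eqType) (r : seq I) (F : I -> R) :
  (forall i, i \in r -> gen_ideal S (F i)) -> gen_ideal S (\sum_(i <- r) F i).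
Proof.
elim: r => [|x r IH] h; first by rewrite big_nil; apply: gen_0.
rewrite big_cons; apply: gen_add; first by apply: h; rewrite inE eqxx.
by apply: IH => i ir; apply: h; rewrite inE ir orbT.
Qed.

Lemma mono_split (N : nat) (K : fieldType) (b : 'X_{1..N}) (tau : {set 'I_N}) :
  (forall i, i \in tau -> (0 < b i)%N) ->
  exists r : {mpoly K[N]}, 'X_[b] = r * \prod_(i in tau) 'X_i.
Proof.
move=> hb; exists (\prod_i 'X_i ^+ (b i - (i \in tau))%N).
rewrite mpolyXE_id [X in _ = _ * X]big_mkcond /= -big_split /=; apply: eq_bigr => i _.
case: ifP => it; last by rewrite subn0 mulr1.
by rewrite -exprSr subn1 prednK // hb.
Qed.

Lemma SR_gen (N : nat) (K : fieldType) (face : {set 'I_N} -> bool) (tau : {set 'I_N}) r :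
  ~~ face tau -> @SR_ideal N K face (r * \prod_(i in tau) 'X_i).
Proof. by move=> ht; apply/gen_mull/gen_in; exists tau. Qed.

Lemma SR_of_supp (N : nat) (K : fieldType) (face : {set 'I_N} -> bool) (g : {mpoly K[N]}) :
  (forall b, b \in msupp g -> exists tau, ~~ face tau /\ forall i, i \in tau -> (0 < b i)%N) ->
  @SR_ideal N K face g.
Proof.
move=> h; rewrite (mpolyE g); apply: gen_sum => b bin.
have [tau [nt ht]] := h b bin.
have [r ->] := @mono_split N K b tau ht.
by rewrite -mul_mpolyC mulrA; apply: SR_gen.
Qed.

Lemma phiX (N : nat) (K : fieldType) (F : {set 'I_N}) (i : 'I_N) :
  phi F ('X_i : {mpoly K[N]}) = hF K F i.
Proof. by rewrite /phi mmapX mmap1U. Qed.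

Lemma phi_prod (N : nat) (K : fieldType) (F : {set 'I_N}) (tau : {set 'I_N}) :
  phi F (\prod_(i in tau) ('X_i : {mpoly K[N]})) = \prod_(i in tau) hF K F i.
Proof. by rewrite /phi rmorph_prod; apply: eq_bigr => i _; exact: phiX. Qed.

Lemma phi0 (N : nat) (K : fieldType) (F : {set 'I_N}) : phi F (0 : {mpoly K[N]}) = 0.
Proof. by rewrite /phi raddf0. Qed.
Lemma phi1 (N : nat) (K : fieldType) (F : {set 'I_N}) : phi F (1 : {mpoly K[N]}) = 1.
Proof. by rewrite /phi rmorph1. Qed.
Lemma phiD (N : nat) (K : fieldType) (F : {set 'I_N}) (a b : {mpoly K[N]}) :
  phi F (a + b) = phi F a + phi F b.
Proof. by rewrite /phi rmorphD. Qed.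
Lemma phiM (N : nat) (K : fieldType) (F : {set 'I_N}) (a b : {mpoly K[N]}) :
  phi F (a * b) = phi F a * phi F b.
Proof. by rewrite /phi rmorphM. Qed.
Lemma phiXn (N : nat) (K : fieldType) (F : {set 'I_N}) (a : {mpoly K[N]}) e :
  phi F (a ^+ e) = phi F a ^+ e.
Proof. by rewrite /phi rmorphXn. Qed.

Lemma SR_Z1 (N : nat) (K : fieldType) (face : {set 'I_N} -> bool) (F : {set 'I_N}) :
  (forall tau, ~~ face tau -> exists i, i \in tau /\ i \notin F) ->
  forall g, @SR_ideal N K face g -> Zm 1 (phi F g).
Proof.
move=> hF0; apply: gen_ind.
- by rewrite phi0; apply: Zm_zero.
- by move=> a b ha hb; rewrite phiD; apply: Zm_add.
- by move=> a b hb; rewrite phiM; apply: Zm_mull.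
move=> x [tau [nt ->]]; rewrite phi_prod.
have [i [it iF]] := hF0 tau nt.
rewrite (bigD1 i) //= /hF (negbTE iF) -mulrA.
apply: (@Zm_mul _ 1 0) => // j; rewrite ltnS leqn0 => /eqP ->.
by rewrite coefX.
Qed.

Lemma pow_Zm (N : nat) (K : fieldType) (I : {mpoly K[N]} -> Prop) (F : {set 'I_N}) :
  (forall g, I g -> Zm 1 (phi F g)) ->
  forall m g, pow_ideal I m g -> Zm m (phi F g).
Proof.
move=> hI m; apply: gen_ind.
- by rewrite phi0; apply: Zm_zero.
- by move=> a b ha hb; rewrite phiD; apply: Zm_add.
- by move=> a b hb; rewrite phiM; apply: Zm_mull.
move=> x [l [<- [hl ->]]]; elim: l hl => [|y l IH] hl.
  by rewrite big_nil; apply: Zm0.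
rewrite big_cons phiM /=; apply: (@Zm_mul _ 1 (size l)).
  by apply/hI/hl; rewrite inE eqxx.
by apply: IH => z zl; apply: hl; rewrite inE zl orbT.
Qed.

Lemma card3_le (T : finType) (a b c : T) : (#|[set a; b; c]| <= 3)%N.
Proof.
rewrite -setUA cardsU1 cards2; by case: (a \notin _); case: (b != c).
Qed.

Lemma card3_eq (T : finType) (a b c : T) : a != b -> a != c -> b != c -> #|[set a; b; c]| = 3.
Proof.
move=> ab ac bc; rewrite -setUA cardsU1 cards2 bc !inE negb_or ab ac.
by [].
Qed.

Lemma Qadj_prop n (a b : nat) : (2 <= n)%N -> Qadj n a b ->
  [/\ (1 <= a <= n)%N, (1 <= b <= n)%N & a != b].
Proof.
move=> n2; rewrite /Qadj /Qedge.
case/orP=> /orP [/andP[/andP[h1 h2] /eqP h3] | /andP[/eqP h1 /eqP h2]];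
  (split; [lia | lia | apply/eqP; lia]).
Qed.

Lemma nonface4 n (tau : {set 'I_n.+2}) : (4 <= #|tau|)%N -> ~~ B_face tau.
Proof.
move=> h4; apply/negP => /existsP [i /existsP [j /andP [_ hs]]].
case/orP: hs => /subset_leq_card hs.
  by have := leq_trans hs (card3_le _ _ _); lia.
by have := leq_trans hs (card3_le _ _ _); lia.
Qed.

Definition isfacet n (c a b : 'I_n.+2) : Prop :=
  (c = inord 0 \/ c = inord n.+1) /\ Qadj n a b.

Lemma facet_face n (c a b : 'I_n.+2) (tau : {set 'I_n.+2}) : isfacet c a b ->
  tau \subset [set c; a; b] -> B_face tau.
Proof.
move=> [hc hq] hs; apply/existsP; exists a; apply/existsP; exists b.
rewrite hq /=; case: hc => <-; by rewrite hs ?orbT.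
Qed.

Lemma facet_out n (c a b : 'I_n.+2) (tau : {set 'I_n.+2}) : isfacet c a b ->
  ~~ B_face tau -> exists i, i \in tau /\ i \notin [set c; a; b].
Proof.
move=> hf nt; have : ~~ (tau \subset [set c; a; b]).
  by apply: contra nt; apply: facet_face hf.
by case/subsetPn => i it iF; exists i.
Qed.

Lemma facet_card n (c a b : 'I_n.+2) : (2 <= n)%N -> isfacet c a b -> #|[set c; a; b]| = 3.
Proof.
move=> n2 [hc hq]; have [ha hb ab] := Qadj_prop n2 hq.
have c0 : (val c = 0 \/ val c = n.+1)%N.
  by case: hc => ->; [left | right]; apply: inordK.
apply: card3_eq => //; apply/eqP => ca; rewrite ca /= in c0; lia.
Qed.

Lemma facet_nonface n (c a b : 'I_n.+2) x : (2 <= n)%N -> isfacet c a b ->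
  x \notin [set c; a; b] -> ~~ B_face (x |: [set c; a; b]).
Proof.
move=> n2 hf xn; apply: nonface4; rewrite cardsU1 xn facet_card //.
Qed.

Lemma Xi_neq0 (N : nat) (K : fieldType) (i : 'I_N) : ('X_i : {mpoly K[N]}) != 0.
Proof.
apply/eqP => h; have := mcoeffXU K i i; rewrite h eqxx mcoeff0 => /eqP.
by rewrite eq_sym oner_eq0.
Qed.

Lemma prodX_neq0 (N : nat) (K : fieldType) (F : {set 'I_N}) :
  \prod_(i in F) ('X_i : {mpoly K[N]}) != 0.
Proof. by apply/prodf_neq0 => i _; apply: Xi_neq0. Qed.

Lemma phi_prodF (N : nat) (K : fieldType) (F : {set 'I_N}) :
  phi F (\prod_(i in F) ('X_i : {mpoly K[N]})) = (\prod_(i in F) ('X_i : {mpoly K[N]}))%:P.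
Proof.
rewrite phi_prod rmorph_prod; apply: eq_bigr => i iF.
by rewrite /hF iF.
Qed.

Lemma dF_pos (N : nat) (F : {set 'I_N}) (b : 'X_{1..N}) :
  dF F b != 0%N -> exists i, i \notin F /\ (0 < b i)%N.
Proof.
move=> h; case: (boolP [exists i, (i \notin F) && (0 < b i)%N]).
  by case/existsP => i /andP[i1 i2]; exists i.
move/existsPn => H; move: h; rewrite /dF big1 // => i iF.
by have := H i; rewrite iF /=; case: (b i).
Qed.

Lemma IB_Z1 n (K : fieldType) (c a b : 'I_n.+2) : isfacet c a b ->
  forall g, @I_B K n g -> Zm 1 (phi [set c; a; b] g).
Proof.
move=> hf; apply: SR_Z1 => tau nt; exact: facet_out hf nt.
Qed.

Lemma Zm1_mul (R : idomainType) (p q : {poly R}) : Zm 1 (p * q) -> Zm 1 p \/ Zm 1 q.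
Proof.
move=> h; have := h 0%N isT; rewrite coef0M => /eqP; rewrite mulf_eq0 => /orP[/eqP p0|/eqP q0].
  by left => i; rewrite ltnS leqn0 => /eqP ->.
by right => i; rewrite ltnS leqn0 => /eqP ->.
Qed.

Lemma Zm1_supp (N : nat) (K : fieldType) (F : {set 'I_N}) (g : {mpoly K[N]}) :
  Zm 1 (phi F g) -> forall b, b \in msupp g -> dF F b != 0%N.
Proof.
move=> h b bin; have := congr1 (mcoeff b) (h 0%N isT).
rewrite mcoeff_phi mcoeff0; case: eqP => // _ /eqP.
by rewrite mcoeff_eq0 bin.
Qed.

Lemma Zm1_1 (N : nat) (K : fieldType) (F : {set 'I_N}) : ~ Zm 1 (phi F (1 : {mpoly K[N]})).
Proof. by move=> h; have := h 0%N isT; rewrite phi1 coef1 /= => /eqP; rewrite oner_eq0. Qed.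

Lemma Zm1_facetX n (K : fieldType) (c a b : 'I_n.+2) (f : {mpoly K[n.+2]}) : (2 <= n)%N -> isfacet c a b ->
  Zm 1 (phi [set c; a; b] f) -> @I_B K n (f * \prod_(i in [set c; a; b]) 'X_i).
Proof.
move=> n2 hf hz.
rewrite (mpolyE f) mulr_suml; apply: gen_sum => be bin.
have [i [iF bi]] := dF_pos (Zm1_supp hz bin).
have hbi : forall j, j \in [set i] -> (0 < be j)%N by move=> j; rewrite inE => /eqP ->.
have [r ->] := @mono_split _ K be [set i] hbi.
rewrite big_set1 -scalerAl -mul_mpolyC -[r * 'X_i * _]mulrA.
have -> : 'X_i * \prod_(j in [set c; a; b]) 'X_j =
   \prod_(j in i |: [set c; a; b]) ('X_j : {mpoly K[n.+2]}) by rewrite big_setU1.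
by rewrite mulrA; apply: SR_gen; apply: facet_nonface.
Qed.

Lemma Ass_facet n (K : fieldType) (c a b : 'I_n.+2) : (2 <= n)%N -> isfacet c a b ->
  Ass (@I_B K n) (fun g => Zm 1 (phi [set c; a; b] g)).
Proof.
move=> n2 hf; rewrite /Ass /is_prime_ideal /is_ideal.
split; first split; first split.
- by rewrite phi0; apply: Zm_zero.
- by move=> x y hx hy; rewrite phiD; apply: Zm_add.
- by move=> x y hy; rewrite phiM; apply: Zm_mull.
- split; first exact: Zm1_1.
  by move=> x y; rewrite phiM; apply: Zm1_mul.
exists (\prod_(i in [set c; a; b]) 'X_i) => f; split => [hz|hI].
  exact: Zm1_facetX.
have := IB_Z1 hf hI; rewrite phiM phi_prodF mulrC => /Zm_primary.
by rewrite coefC eqxx /= prodX_neq0 => /(_ isT).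
Qed.

Lemma Zm1_dec (R : comNzRingType) (p : {poly R}) : Zm 1 p <-> p`_0 = 0.
Proof.
split => [h|h]; first exact: h 0%N isT.
by move=> i; rewrite ltnS leqn0 => /eqP ->.
Qed.

Lemma exists_facet n (K : fieldType) (h : {mpoly K[n.+2]}) : (2 <= n)%N ->
  ~ @I_B K n h -> exists c a b, isfacet c a b /\ ~ Zm 1 (phi [set c; a; b] h).
Proof.
move=> n2 nI; apply: Classical_Prop.NNPP => hne; apply: nI.
apply: SR_of_supp => be bin; exists [set i | (0 < be i)%N]; split; last first.
  by move=> i; rewrite inE.
apply/negP => /existsP [a /existsP [b /andP [hq hs]]].
have key : forall c, isfacet c a b -> [set i | (0 < be i)%N] \subset [set c; a; b] -> False.
  move=> c hf hsub.
  have hz : Zm 1 (phi [set c; a; b] h).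
    apply: Classical_Prop.NNPP => nz; apply: hne; by exists c, a, b.
  have [i [iF bi]] := dF_pos (Zm1_supp hz bin).
  by move/subsetP: hsub => /(_ i); rewrite inE bi => /(_ isT); apply/negP.
case/orP: hs => hs.
  by apply: (key _ _ hs); split => //; left.
by apply: (key _ _ hs); split => //; right.
Qed.

Lemma pow_gen0 (R : comNzRingType) (I : R -> Prop) m x :
  (exists l : seq R, size l = m /\ (forall g, g \in l -> I g) /\ x = \prod_(g <- l) g) ->
  pow_ideal I m x.
Proof. by move=> h; apply: gen_in. Qed.

Lemma pow_mul (R : comNzRingType) (I : R -> Prop) a b g h :
  pow_ideal I a g -> pow_ideal I b h -> pow_ideal I (a + b) (g * h).
Proof.
move=> hg; move: g hg h; apply: gen_ind.
- by move=> h _; rewrite mul0r; apply: gen_0.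
- by move=> x y hx hy h hh; rewrite mulrDl; apply: gen_add; [apply: hx|apply: hy].
- by move=> x y hy h hh; rewrite -mulrA; apply/gen_mull/hy.
move=> x [l [sl [hl ->]]]; apply: gen_ind.
- by rewrite mulr0; apply: gen_0.
- by move=> y z hy hz; rewrite mulrDr; apply: gen_add.
- by move=> y z hz; rewrite mulrCA; apply: gen_mull.
move=> y [l' [sl' [hl' ->]]]; apply: pow_gen0; exists (l ++ l'); split.
  by rewrite size_cat sl sl'.
split; last by rewrite big_cat.
by move=> g; rewrite mem_cat => /orP[/hl|/hl'].
Qed.

Lemma pow_1 (R : comNzRingType) (I : R -> Prop) x : I x -> pow_ideal I 1 x.
Proof.
move=> hx; apply: pow_gen0; exists [:: x]; split => //; split; last by rewrite big_seq1.
by move=> g; rewrite inE => /eqP ->.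
Qed.

Lemma pow_one (R : comNzRingType) (I : R -> Prop) : pow_ideal I 0 1.
Proof. by apply: pow_gen0; exists [::]; split => //; split => //; rewrite big_nil. Qed.

Lemma pow_exp (R : comNzRingType) (I : R -> Prop) a g e :
  pow_ideal I a g -> pow_ideal I (a * e) (g ^+ e).
Proof.
move=> hg; elim: e => [|e IH]; first by rewrite muln0 expr0; apply: pow_one.
by rewrite exprS mulnS; apply: pow_mul.
Qed.

Lemma pow_prod_seq (R : comNzRingType) (I : R -> Prop) a (T : eqType) (r : seq T) (F : T -> R) :
  (forall j, j \in r -> pow_ideal I a (F j)) -> pow_ideal I (a * size r) (\prod_(j <- r) F j).
Proof.
elim: r => [|x r IH] hF; first by rewrite big_nil muln0; apply: pow_one.
rewrite big_cons /= mulnS; apply: pow_mul; first by apply: hF; rewrite inE eqxx.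
by apply: IH => j jr; apply: hF; rewrite inE jr orbT.
Qed.

Definition oo (k j : nat) : 'I_(2 * k).+2 := inord (2 * j + 1).
Definition ee (k j : nat) : 'I_(2 * k).+2 := inord (2 * j + 2).

Lemma val_oo k j : (j < k)%N -> nat_of_ord (oo k j) = (2 * j + 1)%N.
Proof. by move=> jk; rewrite /oo inordK //; lia. Qed.
Lemma val_ee k j : (j < k)%N -> nat_of_ord (ee k j) = (2 * j + 2)%N.
Proof. by move=> jk; rewrite /ee inordK //; lia. Qed.

Lemma facet_vals n (c a b : 'I_n.+2) : (2 <= n)%N -> isfacet c a b ->
  [/\ (nat_of_ord c = 0 \/ nat_of_ord c = n.+1)%N, (1 <= a <= n)%N, (1 <= b <= n)%N &
      (a.+1 == b :> nat) || (b.+1 == a :> nat) || ((a == n :> nat) && (b == 1 :> nat)) || ((b == n :> nat) && (a == 1 :> nat))].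
Proof.
move=> n2 [hc hq]; have [ha hb ab] := Qadj_prop n2 hq.
split => //.
  by case: hc => ->; [left | right]; apply: inordK.
move: hq; rewrite /Qadj /Qedge.
case/orP=> /orP [/andP[/andP[h1 h2] /eqP h3] | /andP[/eqP h1 /eqP h2]];
  rewrite ?h1 ?h2 ?h3 ?eqxx ?orbT //.
Qed.

Lemma oo_unique k (c a b : 'I_(2 * k).+2) j1 j2 : (2 <= k)%N -> isfacet c a b ->
  (j1 < k)%N -> (j2 < k)%N -> oo k j1 \in [set c; a; b] -> oo k j2 \in [set c; a; b] -> j1 = j2.
Proof.
move=> k2 hf l1 l2 i1 i2; have [hc ha hb hab] := facet_vals (ltac:(lia) : (2 <= 2 * k)%N) hf.
have v1 := val_oo l1; have v2 := val_oo l2.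
have h1 : (2*j1+1 = c \/ 2*j1+1 = a \/ 2*j1+1 = b)%N.
  by move: i1; rewrite !inE -v1 => /orP[/orP[]|] /eqP ->; auto.
have h2 : (2*j2+1 = c \/ 2*j2+1 = a \/ 2*j2+1 = b)%N.
  by move: i2; rewrite !inE -v2 => /orP[/orP[]|] /eqP ->; auto.
have hab' : ((a:nat).+1 = b \/ (b:nat).+1 = a \/ ((a:nat) = 2 * k /\ (b:nat) = 1) \/ ((b:nat) = 2 * k /\ (a:nat) = 1))%N.
  by move: hab => /orP[/orP[/orP[/eqP|/eqP]|/andP[/eqP ? /eqP ?]]|/andP[/eqP ? /eqP ?]]; lia.
lia.
Qed.

Definition fmono (K : fieldType) (k s : nat) : {mpoly K[(2 * k).+2]} :=
  \prod_(j < k) 'X_(oo k j) ^+ s.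

Lemma exist_part (K : fieldType) (k s : nat) : (2 <= k)%N ->
  symb_pow (@I_B K (2 * k)) (s * (k - 1)) (fmono K k s).
Proof.
move=> k2 P [[_ [nP1 _]] [h hP]].
have n2 : (2 <= 2 * k)%N by lia.
have nIh : ~ @I_B K (2 * k) h by move=> hI; apply: nP1; apply/hP; rewrite mul1r.
have [c [a [b [hf nz]]]] := exists_facet n2 nIh.
pose G : {mpoly K[(2 * k).+2]} := \prod_(i in [set c; a; b]) 'X_i.
exists (G ^+ (s * (k - 1))); split.
  move=> Pu; apply: nz; have := IB_Z1 hf ((hP _).1 Pu).
  rewrite phiM phiXn phi_prodF -rmorphXn => /Zm_primary; apply.
  by rewrite coefC eqxx /= expf_neq0 // prodX_neq0.
have [j0 hj0] : exists j0 : 'I_k, forall j : 'I_k, j != j0 -> oo k j \notin [set c; a; b].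
  case: (pickP (fun j : 'I_k => oo k j \in [set c; a; b])) => [j0 hj0 | none].
    exists j0 => j ne; apply/negP => hj; move/negP: ne; apply; apply/eqP/val_inj.
    exact: (oo_unique k2 hf (ltn_ord j) (ltn_ord j0) hj hj0).
  have k0 : (0 < k)%N by lia.
  by exists (Ordinal k0) => j _; rewrite none.
rewrite /fmono (bigD1 j0) //=.
have -> : \prod_(j < k | j != j0) ('X_(oo k j) : {mpoly K[(2 * k).+2]}) ^+ s =
          \prod_(j in [set~ j0]) 'X_(oo k j) ^+ s by apply: eq_bigl => j; rewrite !inE.
have cA : #|[set~ j0]| = (k - 1)%N by rewrite cardsC1 card_ord subn1.
have -> : G ^+ (s * (k - 1)) = \prod_(j in [set~ j0]) G ^+ s by rewrite prodr_const cA exprM.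
rewrite mulrCA -big_split /=; apply: gen_mull.
rewrite -big_enum /=.
have := @pow_prod_seq _ (@I_B K (2 * k)) s _ (enum [set~ j0])
          (fun j => G ^+ s * 'X_(oo k j) ^+ s).
rewrite -cardE cA; apply => j; rewrite mem_enum inE => jne.
rewrite -exprMn; have H := @pow_exp _ (@I_B K (2 * k)) 1 (G * 'X_(oo k j)) s.
rewrite mul1n in H; apply: H; apply: pow_1.
have -> : G * 'X_(oo k j) = \prod_(i in oo k j |: [set c; a; b]) 'X_i.
  rewrite big_setU1 /=; first by rewrite mulrC.
  by apply: hj0; rewrite inE in jne.
have := @SR_gen _ K (@B_face (2 * k)) (oo k j |: [set c; a; b]) 1; rewrite mul1r; apply.
by apply: facet_nonface => //; apply: hj0; rewrite inE in jne.
Qed.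

Lemma Zm_supp (N : nat) (K : fieldType) (F : {set 'I_N}) (g : {mpoly K[N]}) m b :
  Zm m (phi F g) -> b \in msupp g -> (m <= dF F b)%N.
Proof.
move=> h bin; case: (leqP m (dF F b)) => // lt.
have := congr1 (mcoeff b) (h _ lt); rewrite mcoeff_phi eqxx mcoeff0 => /eqP.
by rewrite mcoeff_eq0 bin.
Qed.

Lemma dF_sum (N : nat) (F : {set 'I_N}) (b : 'X_{1..N}) :
  (dF F b + \sum_(i in F) b i)%N = mdeg b.
Proof. by rewrite mdegE [RHS](bigID (fun i => i \in F)) /= addnC. Qed.

Lemma sum3 (N : nat) (c x y : 'I_N) (b : 'X_{1..N}) : c != x -> c != y -> x != y ->
  (\sum_(i in [set c; x; y]) b i = b c + b x + b y)%N.
Proof.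
move=> cx cy xy; rewrite -setUA big_setU1 /=; last by rewrite !inE negb_or cx cy.
by rewrite big_setU1 /= ?big_set1 ?addnA // inE.
Qed.

Lemma sum_decomp k (g : 'I_(2 * k).+2 -> nat) :
  (\sum_i g i = g (inord 0) + \sum_(j < k) (g (oo k j) + g (ee k j)) + g (inord (2 * k).+1))%N.
Proof.
pose G i := g (inord i).
have E : forall k', (\sum_(0 <= i < 2 * k' + 1) G i = G 0 + \sum_(j < k') (G (2 * j + 1) + G (2 * j + 2)))%N.
  elim => [|k' IH]; first by rewrite big_nat1 big_ord0 addn0.
  have -> : (2 * k'.+1 + 1 = (2 * k' + 1).+2)%N by lia.
  rewrite !big_nat_recr //= IH big_ord_recr /= -!addnA; congr (_ + (_ + _)).
  by congr (_ + _); congr G; lia.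
rewrite (eq_bigr (fun i : 'I_(2 * k).+2 => G i)); last by move=> i _; rewrite /G inord_val.
rewrite -(big_mkord xpredT G) big_nat_recr //=.
have := E k; have -> : (2 * k + 1 = (2 * k).+1)%N by lia.
by move=> ->.
Qed.

Lemma isfacet_oe k (c : 'I_(2 * k).+2) (j : nat) : (j < k)%N ->
  (c = inord 0 \/ c = inord (2 * k).+1) -> isfacet c (oo k j) (ee k j).
Proof.
move=> jk hc; split => //; rewrite /Qadj /Qedge (val_oo jk) (val_ee jk).
apply/orP; left; apply/orP; left; apply/andP; split; first (apply/andP; split); lia.
Qed.

Lemma facet_bound (K : fieldType) (k s : nat) (g : {mpoly K[(2 * k).+2]}) b
  (c : 'I_(2 * k).+2) (j : nat) : (2 <= k)%N -> (j < k)%N ->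
  (c = inord 0 \/ c = inord (2 * k).+1) ->
  symb_pow (@I_B K (2 * k)) (s * (k - 1)) g -> b \in msupp g ->
  (b c + b (oo k j) + b (ee k j) + s * (k - 1) <= mdeg b)%N.
Proof.
move=> k2 jk hc hs bin.
have hf := isfacet_oe jk hc.
have [u [nu hu]] := hs _ (Ass_facet K (ltac:(lia) : (2 <= 2 * k)%N) hf).
have := pow_Zm (IB_Z1 hf) hu; rewrite phiM => /Zm_primary hz.
have hg : Zm (s * (k - 1)) (phi [set c; oo k j; ee k j] g).
  apply: hz; apply/eqP => e; apply: nu; exact/Zm1_dec.
have := Zm_supp hg bin; rewrite -(dF_sum [set c; oo k j; ee k j] b).
have vc : (nat_of_ord c = 0 \/ nat_of_ord c = (2 * k).+1)%N.
  by case: hc => ->; [left | right]; apply: inordK.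
have vo := val_oo jk; have ve := val_ee jk.
rewrite sum3; try (apply/eqP => /(congr1 (@nat_of_ord _)); lia).
lia.
Qed.

Lemma prodX_homog (K : fieldType) (N : nat) (T : Type) (r : seq T) (f : T -> 'I_N) s :
  \prod_(j <- r) ('X_(f j) : {mpoly K[N]}) ^+ s \is (s * size r).-homog.
Proof.
elim: r => [|x r IH]; first by rewrite big_nil muln0; apply: dhomog1.
rewrite big_cons /= mulnS; apply: dhomogM => //.
have H : ('X_(f x) : {mpoly K[N]}) \is 1.-homog by rewrite dhomogX; apply/eqP; apply: mdeg1.
by have := dhomogMn s H; rewrite mul1n.
Qed.

Lemma fmono_homog (K : fieldType) (k s : nat) : fmono K k s \is (s * k).-homog.
Proof.
have := @prodX_homog K _ _ (enum 'I_k) (oo k) s.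
by rewrite size_enum_ord big_enum.
Qed.

Lemma fmono_neq0 (K : fieldType) (k s : nat) : fmono K k s != 0.
Proof. by apply/prodf_neq0 => j _; rewrite expf_neq0 // Xi_neq0. Qed.

Local Close Scope ring_scope.

Theorem proposition3p12 (K : fieldType) (k : nat) (hk : (2 <= k)%N)
    (s : nat) (hs : (0 < s)%N) :
  is_alpha (symb_pow (@I_B K (2 * k)) (s * (k - 1))) (s * k).
Proof.
split.
  exists (fmono K k s); split; first exact: fmono_neq0.
  split; first exact: fmono_homog.
  exact: exist_part.
move=> t g gnz ght hsy.
have bin := mlead_supp gnz; set b := mlead g in bin.
have Tb : mdeg b = t by apply: (dhomog_mf ght bin).
set m := (s * (k - 1))%N.
set S := (\sum_(j < k) (b (oo k j) + b (ee k j)))%N.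
have Hsum : forall c : 'I_(2 * k).+2, (c = inord 0 \/ c = inord (2 * k).+1) ->
    (k * b c + S + k * m <= k * t)%N.
  move=> c hc.
  have : (\sum_(j < k) (b c + b (oo k j) + b (ee k j) + m) <= \sum_(j < k) mdeg b)%N.
    by apply: leq_sum => j _; exact: (@facet_bound K k s g b c j hk (ltn_ord j) hc hsy bin).
  rewrite sum_nat_const card_ord Tb.
  rewrite (eq_bigr (fun j : 'I_k => b c + (b (oo k j) + b (ee k j)) + m)%N); last first.
    by move=> j _; rewrite addnA.
  by rewrite !big_split /= !sum_nat_const card_ord /S big_split.
have H0 := Hsum _ (or_introl erefl).
have H1 := Hsum _ (or_intror erefl).
have D : t = (b (inord 0) + S + b (inord (2 * k).+1))%N by rewrite -Tb mdegE sum_decomp.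
clear Hsum; move: H0 H1 D; rewrite /m; move: (b (inord 0)) (b (inord (2 * k).+1)) S => b0 b1 S0 H0 H1 D.
have E1 : ((k - 1) * (s * k) <= (k - 1) * t)%N by nia.
by rewrite leq_pmul2l in E1; lia.
Qed.
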